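(* For any $\delta\in(0,1)$ there exists a constant $c(\delta)>0$ such that the following holds. Let $G=(V,E)$ be a simple graph on $n$ vertices with minimal degree at least $\delta n$. Then $\gamma(G)\ge c(\delta)\,\Phi(G)$.
   Context: Let $P$ be the transition matrix of the simple random walk on $G$ and $\pi(v)=\deg(v)/2|E|$ its stationary distribution. $P$ is self-adjoint on $L^2(\pi)$ with real eigenvalues $1=\lambda_1\ge\lambda_2\ge\dots\ge\lambda_n\ge -1$; the spectral gap is $\gamma(G)=1-\lambda_2$. For $S\subseteq V$, $\mathrm{Vol}(S)=\sum_{v\in S}\deg(v)$, $\partial S=\{(u,v)\in E: u\in S, v\notin S\}$, $\pi(S)=\sum_{v\in S}\pi(v)$, and the Cheeger constant is $\Phi(G)=\min_{S:\pi(S)\le 1/2}|\partial S|/\mathrm{Vol}(S)$. *)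

(* Defs.v *)
From HB Require Import structures.
From mathcomp Require Import all_boot all_order all_algebra.
From mathcomp Require Import reals.
Set Implicit Arguments. Unset Strict Implicit. Unset Printing Implicit Defensive.
Import Order.TTheory GRing.Theory Num.Theory.
Local Open Scope ring_scope.

Section Graph.
Variable n : nat.
Variable e : rel 'I_n.

Definition simple_graph := symmetric e /\ irreflexive e.

Definition deg (v : 'I_n) : nat := #|[set u | e v u]|.

Definition Vol (S : {set 'I_n}) : nat := (\sum_(v in S) deg v)%N.

Definition bdry (S : {set 'I_n}) : nat :=
  #|[set p : 'I_n * 'I_n | [&& p.1 \in S, p.2 \notin S & e p.1 p.2]]|.

Variable R : realType.

(* stationary measure: pi(S) = Vol(S) / (2|E|) = Vol(S) / Vol(V) *)
Definition piS (S : {set 'I_n}) : R := (Vol S)%:R / (Vol setT)%:R.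

Definition trans_mx : 'M[R]_n :=
  \matrix_(i, j) (if e i j then ((deg i)%:R)^-1 else 0).

(* Cheeger constant: min over nonempty S with pi(S) <= 1/2 of |dS|/Vol(S).
   The default 1 of the big min is harmless since |dS| <= Vol(S). *)
Definition cheeger : R :=
  \big[Order.min/1]_(S : {set 'I_n} | (S != set0) && (piS S <= 2^-1))
     ((bdry S)%:R / (Vol S)%:R).

Definition sorted_spectrum (s : seq R) :=
  sorted (>=%R) s /\ char_poly trans_mx = \prod_(x <- s) ('X - x%:P).

End Graph.

(* Main.v *)
Require Import Defs.
From HB Require Import structures.
From mathcomp Require Import all_boot all_order all_algebra.
From mathcomp Require Import reals.
From mathcomp Require Import ring lra zify.
From Stdlib Require Import Lia.
Set Implicit Arguments. Unset Strict Implicit. Unset Printing Implicit Defensive.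
Import Order.TTheory GRing.Theory Num.Theory.
Local Open Scope ring_scope.

Ltac nn := repeat first [ exact: sqr_ge0 | exact: ler0n | exact: ler01 | exact: lexx | apply: addr_ge0 | apply: mulr_ge0 ].

Section G.
Variable R : realType.
Variable n : nat.
Variable e : rel 'I_n.
Hypothesis esym : symmetric e.

Definition dR (i : 'I_n) : R := (deg e i)%:R.

Lemma degE i : deg e i = (\sum_j (e i j : nat))%N.
Proof.
rewrite /deg -sum1dep_card big_mkcond /=; apply: eq_bigr => j _.
by case: (e i j).
Qed.

Lemma dRE i : dR i = \sum_j (e i j)%:R.
Proof. by rewrite /dR degE natr_sum. Qed.

Lemma dRE' j : dR j = \sum_i (e i j)%:R.
Proof. by rewrite dRE; apply: eq_bigr => i _; rewrite esym. Qed.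

Definition E2 (g : 'I_n -> R) := \sum_i \sum_j (e i j)%:R * (g i - g j)^+2.
Definition Qf (g : 'I_n -> R) := \sum_i dR i * g i ^+ 2.

Lemma rayleigh (u : 'I_n -> R) (lam : R) :
  (forall j, \sum_i (e i j)%:R * u i = lam * dR j * u j) ->
  E2 u = 2 * (1 - lam) * Qf u.
Proof.
move=> Hu.
have -> : E2 u = \sum_i \sum_j (e i j)%:R * u i ^+ 2
               + \sum_i \sum_j (e i j)%:R * u j ^+ 2
               - 2 * \sum_i \sum_j (e i j)%:R * u i * u j.
  rewrite /E2 mulr_sumr -!big_split /= -sumrB.
  apply: eq_bigr => i _; rewrite mulr_sumr -!big_split /= -sumrB.
  by apply: eq_bigr => j _; ring.
have -> : \sum_i \sum_j (e i j)%:R * u i * u j = \sum_j u j * \sum_i (e i j)%:R * u i.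
  rewrite exchange_big; apply: eq_bigr => j _; rewrite mulr_sumr.
  by apply: eq_bigr => i _; ring.
have -> : \sum_i \sum_j (e i j)%:R * u i ^+ 2 = Qf u.
  by apply: eq_bigr => i _; rewrite -mulr_suml dRE.
have -> : \sum_i \sum_j (e i j)%:R * u j ^+ 2 = Qf u.
  rewrite exchange_big; apply: eq_bigr => j _; rewrite -mulr_suml dRE'.
  done.
have -> : \sum_j u j * \sum_i (e i j)%:R * u i = lam * Qf u.
  rewrite /Qf mulr_sumr; apply: eq_bigr => j _; rewrite Hu; ring.
ring.
Qed.
End G.

Section Deflate.
Variable F : fieldType.
Variable n' : nat.
Local Notation n := n'.+1.
Variable P : 'M[F]_n.
Hypothesis Prow : forall i, \sum_j P i j = 1.

Definition Cm : 'M[F]_n := \matrix_(i, j) ((j == ord0) && (i != ord0))%:R.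

Lemma CmC : Cm *m Cm = 0.
Proof.
apply/matrixP => i k; rewrite !mxE big1 // => j _; rewrite !mxE.
by case: (eqVneq j ord0) => _; rewrite /= ?andbF ?mulr0 ?mul0r.
Qed.

Definition Bm : 'M[F]_n := 1 + Cm.
Definition Bim : 'M[F]_n := 1 - Cm.

Lemma BBi : Bm *m Bim = 1%:M.
Proof. have := CmC; rewrite /Bm /Bim !mulmxE => H. by rewrite mulrDl mulrBr !mul1r mulrBr mulr1 H subr0 subrK. Qed.

Lemma BiB : Bim *m Bm = 1%:M.
Proof. have := CmC; rewrite /Bm /Bim !mulmxE => H. by rewrite mulrBl mulrDr !mul1r mulrDr mulr1 H addr0 addrK. Qed.

Lemma Cm_mull m (X : 'M[F]_(n, m)) i k : (Cm *m X) i k = (i != ord0)%:R * X ord0 k.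
Proof.
rewrite !mxE (bigD1 ord0) //= big1 ?addr0; first by rewrite !mxE eqxx.
by move=> j /negPf Hj; rewrite !mxE Hj mul0r.
Qed.

Lemma Cm_mulr m (X : 'M[F]_(m, n)) i k :
  (X *m Cm) i k = (k == ord0)%:R * \sum_(j | j != ord0) X i j.
Proof.
rewrite !mxE mulr_sumr [RHS]big_mkcond /=; apply: eq_bigr => j _; rewrite !mxE.
by case: (j != ord0); case: (k == ord0); rewrite ?mulr0 ?mul0r ?mulr1 ?mul1r.
Qed.

Definition Mm := Bim *m P *m Bm.

Lemma Mm_col0 i : Mm i ord0 = (i == ord0)%:R.
Proof.
have PB : forall i, (P *m Bm) i ord0 = 1.
  move=> i0; rewrite /Bm mulmxDr mulmx1 mxE Cm_mulr eqxx mul1r.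
  by rewrite -[RHS](Prow i0) [RHS](bigD1 ord0).
have mxB : forall (A B : 'M[F]_n) a b, (A - B) a b = A a b - B a b by move=> *; rewrite !mxE.
rewrite /Mm -mulmxA /Bim mulmxBl mul1mx mxB Cm_mull !PB.

by case: (eqVneq i ord0) => _ /=; rewrite ?mul0r ?subr0 ?mulr1 ?subrr.
Qed.

Definition Pd : 'M[F]_n' := row' ord0 (col' ord0 Mm).

Lemma char_poly_sim : char_poly P = char_poly Mm.
Proof.
rewrite /char_poly /char_poly_mx.
have -> : 'X%:M - map_mx polyC Mm =
   map_mx polyC Bim *m ('X%:M - map_mx polyC P) *m map_mx polyC Bm.
  rewrite mulmxBr mulmxBl /Mm !map_mxM; congr (_ - _).
  rewrite mul_mx_scalar -scalemxAl -mul_scalar_mx -map_mxM BiB map_mx1.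
  by rewrite mul_scalar_mx scalemx1.
rewrite !det_mulmx mulrC mulrA -det_mulmx -map_mxM BBi map_mx1 det1 mul1r.
done.
Qed.

Lemma cpmxE m (A : 'M[F]_m) i j : char_poly_mx A i j = 'X *+ (i == j) - (A i j)%:P.
Proof. by rewrite !mxE. Qed.

Lemma char_poly_deflate : char_poly P = ('X - 1%:P) * char_poly Pd.
Proof.
rewrite char_poly_sim /char_poly (expand_det_col _ ord0) big_ord_recl /=.
rewrite big1 ?addr0; last first.
  by move=> k _; rewrite cpmxE Mm_col0 lift_eqF /= mulr0n subrr mul0r.
rewrite cpmxE Mm_col0 eqxx /= mulr1n /cofactor /= expr0 mul1r.
by rewrite row'_col'_char_poly_mx.
Qed.

Lemma deflate_eigen lam : root (char_poly Pd) lam ->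
  exists v : 'rV[F]_n, [/\ v != 0, v *m P = lam *: v & \sum_j v ord0 j = 0].
Proof.
rewrite -eigenvalue_root_char => /eigenvalueP [w Hw wn0].
pose x : 'rV[F]_n := \row_j (if unlift ord0 j is Some k then w ord0 k else 0).
have xM : x *m Mm = lam *: x.
  apply/rowP => j; rewrite !mxE big_ord_recl /= !mxE unlift_none mul0r add0r.
  have -> : \sum_(i < n') x ord0 (lift ord0 i) * Mm (lift ord0 i) j =
            \sum_(i < n') w ord0 i * Mm (lift ord0 i) j.
    by apply: eq_bigr => i _; rewrite !mxE liftK.
  case: (unliftP ord0 j) => [l ->|->].
    have := congr1 (fun M : 'rV[F]_n' => M ord0 l) Hw; rewrite !mxE => <-.
    by apply: eq_bigr => i _; rewrite !mxE.
  rewrite mulr0 big1 // => i _.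
  by rewrite Mm_col0 lift_eqF mulr0.
exists (x *m Bim); split.
- apply: contra wn0 => /eqP H.
  have : x = 0 by rewrite -(mulmx1 x) -BiB mulmxA H mul0mx.
  move=> x0; apply/eqP/rowP => k; have := congr1 (fun M : 'rV[F]_n => M ord0 (lift ord0 k)) x0.
  by rewrite !mxE liftK.
- have -> : x *m Bim *m P = x *m Mm *m Bim.
    by rewrite /Mm !mulmxA -(mulmxA _ Bm Bim) BBi mulmx1.
  by rewrite xM scalemxAl.
- rewrite /Bim mulmxBr mulmx1.
  have -> : \sum_j (x - x *m Cm) ord0 j = \sum_j x ord0 j - \sum_j (x *m Cm) ord0 j.
    by rewrite -sumrB; apply: eq_bigr => j _; rewrite !mxE.
  have HS : \sum_k (x *m Cm) ord0 k = \sum_(j | j != ord0) x ord0 j.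
    rewrite (eq_bigr (fun k => (k == ord0)%:R * \sum_(j | j != ord0) x ord0 j)); last first.
      by move=> k _; rewrite Cm_mulr.
    by rewrite -mulr_suml (bigD1 ord0) //= big1 ?addr0 ?mul1r // => k /negPf ->.
  have Hx : \sum_j x ord0 j = \sum_(j | j != ord0) x ord0 j.
    by rewrite (bigD1 ord0) //= mxE unlift_none add0r.
  by rewrite HS Hx subrr.
Qed.
End Deflate.


Section ML.
Variable R : realType.
Variable n : nat.
Variable e : rel 'I_n.
Hypothesis esym : symmetric e.
Variable delta : R.
Hypothesis delta_gt0 : 0 < delta.
Hypothesis Hdeg : forall v, delta * n%:R <= dR R e v.
Variable g : 'I_n -> R.
Hypothesis g_ge0 : forall i, 0 <= g i.

Local Notation d := (dR R e).

Definition nearc i : R := \sum_j ((e i j) && (`|g j - g i| <= g i / 2))%:R.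
Definition good i := (0 < g i) && (d i < 2 * nearc i).
Definition bad i := (0 < g i) && ~~ good i.

Lemma rowE2_ge0 i : 0 <= \sum_j (e i j)%:R * (g i - g j)^+2 :> R.
Proof. by apply: sumr_ge0 => j _; rewrite mulr_ge0 ?ler0n ?sqr_ge0. Qed.

Lemma E2_ge0 : 0 <= E2 e g.
Proof. by apply: sumr_ge0 => i _; apply: rowE2_ge0. Qed.

Lemma bad_bound i : bad i -> d i * g i ^+ 2 <= 8 * \sum_j (e i j)%:R * (g i - g j)^+2.
Proof.
case/andP => gi0; rewrite /good gi0 /= -leNgt => Hn.
pose farc := \sum_j ((e i j) && ~~ (`|g j - g i| <= g i / 2))%:R : R.
have Hd : d i = nearc i + farc.
  rewrite (dRE R e) /nearc /farc -big_split /=; apply: eq_bigr => j _.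
  by case: (e i j); case: (`|g j - g i| <= g i / 2); rewrite /= ?addr0 ?add0r.
have Hf : farc * (g i / 2) ^+ 2 <= \sum_j (e i j)%:R * (g i - g j)^+2.
  rewrite /farc mulr_suml; apply: ler_sum => j _.
  case: (e i j) => /=; last by rewrite !mul0r.
  case: (leP `|g j - g i| (g i / 2)) => H /=; first by rewrite mul0r mul1r sqr_ge0.
  rewrite !mul1r -normrN opprB in H *.
  rewrite -[(g i - g j)^+2]real_normK ?num_real //.
  rewrite lerXn2r ?nnegrE ?ltW //; first by rewrite divr_gt0.
  by apply: lt_trans H; rewrite divr_gt0.
have farc_ge0 : 0 <= farc by apply: sumr_ge0 => j _; rewrite ler0n.
nra.
Qed.

Variable m : R.
Hypothesis m_gt0 : 0 < m.
Definition tk (k : nat) : R := m * 4%:R ^+ k.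

Lemma tk_gt0 k : 0 < tk k.
Proof. by rewrite /tk mulr_gt0 // exprn_gt0. Qed.

Lemma tkS k : tk k.+1 = 4%:R * tk k.
Proof. by rewrite /tk exprS; ring. Qed.

Lemma tk_mono k l : (k <= l)%N -> tk k <= tk l.
Proof.
move=> kl; rewrite /tk ler_pM2l // ler_eXn2l //.
by rewrite ltr1n.
Qed.

Lemma tk_add k l : tk (k + l) = 4%:R ^+ l * tk k.
Proof. by rewrite /tk exprD; ring. Qed.

Lemma geom_full N : \sum_(k < N.+1) tk k ^+ 2 <= 16%:R / 15%:R * tk N ^+ 2.
Proof.
elim: N => [|N IH]; first by rewrite big_ord1 ler_peMl ?sqr_ge0 // ler_pdivlMr ?ltr0n // mul1r ler_nat.
rewrite big_ord_recr /= tkS.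
have := IH; have := sqr_ge0 (tk N); lra.
Qed.

Lemma geom (X : R) N : \sum_(k < N) (tk k < X)%R%:R * tk k ^+ 2 <= 16%:R / 15%:R * X ^+ 2.
Proof.
elim: N => [|N IH]; first by rewrite big_ord0 mulr_ge0 ?sqr_ge0 // divr_ge0 ?ler0n.
case: (leP X (tk N)) => HN.
  by rewrite big_ord_recr /= ltNge HN /= mul0r addr0.
have -> : \sum_(k < N.+1) (tk k < X)%R%:R * tk k ^+ 2 = \sum_(k < N.+1) tk k ^+ 2.
  apply: eq_bigr => k _; rewrite (le_lt_trans (tk_mono (ltnSE (ltn_ord k))) HN) mul1r //.
apply: (le_trans (geom_full N)).
rewrite ler_pM2l ?divr_gt0 ?ltr0n //.
by rewrite lerXn2r ?nnegrE ?(ltW HN) ?(ltW (tk_gt0 N)) ?(ltW (lt_trans (tk_gt0 N) HN)).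
Qed.


Definition nearb i j := (e i j) && (`|g j - g i| <= g i / 2).

Definition free k := [forall i, good i ==> ~~ ((tk k < g i) && (g i <= tk k.+1))].

Lemma excl v w j a b : (b.+2 <= a)%N -> tk a < g v -> g w <= tk b.+1 ->
  ~~ (nearb v j && nearb w j).
Proof.
move=> ba Hv Hw; apply/negP => /andP [/andP [_ H1] /andP [_ H2]].
move: H1 H2; rewrite !ler_norml => /andP [H1 H1'] /andP [H2 H2'].
have := tk_mono ba; rewrite !tkS => Ht; rewrite tkS in Hw.
have := tk_gt0 b; lra.
Qed.

Lemma count_free a L' : 2 <= (L'.+1)%:R * delta -> (2 * L' <= a)%N ->
  exists2 r, (r <= L')%N & free (a - 2 * r)%N.
Proof.
move=> HL Ha.
case: (boolP [exists r : 'I_L'.+1, free (a - 2 * r)%N]) => [/existsP [r Hr]|].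
  by exists r => //; rewrite -ltnS.
rewrite negb_exists => /forallP Hnf.
have : forall r : 'I_L'.+1, exists v, good v && ((tk (a - 2 * r)%N < g v) && (g v <= tk (a - 2 * r)%N.+1)).
  move=> r; have := Hnf r; rewrite /free negb_forall => /existsP [v].
  by rewrite negb_imply negbK => Hv; exists v.
case/fin_all_exists => v Hv.
have Hsum : \sum_(r < L'.+1) nearc (v r) <= n%:R.
  rewrite /nearc exchange_big /=.
  have -> : (n%:R : R) = \sum_(j < n) 1 by rewrite sumr_const card_ord.
  apply: ler_sum => j _.
  case: (boolP [exists r, nearb (v r) j]) => [/existsP [r0 Hr0]|].
    rewrite (bigD1 r0) //= big1 ?addr0.
      by move: Hr0; rewrite /nearb => ->.
    move=> r Hr; apply/eqP; rewrite pnatr_eq0 eqb0.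
    have := Hv r; have := Hv r0.
    move=> /andP [_ /andP [H0 H0']] /andP [_ /andP [H1 H1']].
    have [Hlt|Hlt] : (r < r0)%N \/ (r0 < r)%N.
      case: (ltngtP r r0) => Hrr; [by left|by right|]; have Hrr' : r = r0 by apply: val_inj.
      by rewrite Hrr' eqxx in Hr.
    - have := excl j (a := (a - 2 * r)%N) (b := (a - 2 * r0)%N) _ H1 H0'.
      have Hab : ((a - 2 * r0).+1 < a - 2 * r)%N by have := ltn_ord r0; lia.
      by move=> H; have := H Hab; rewrite Hr0 andbT.
    - have := excl j (a := (a - 2 * r0)%N) (b := (a - 2 * r)%N) _ H0 H1'.
      have Hab : ((a - 2 * r).+1 < a - 2 * r0)%N by have := ltn_ord r; lia.
      by move=> H; have := H Hab; rewrite Hr0 andTb.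
  rewrite negb_exists => /forallP H.
  rewrite big1 ?ler0n // => r _; have := H r; rewrite /nearb => /negPf ->.
  done.
have Hlow : \sum_(r < L'.+1) (delta * n%:R) < \sum_(r < L'.+1) 2 * nearc (v r).
  rewrite big_ord_recl [X in _ < X]big_ord_recl.
  apply: ltr_leD.
    have := Hv ord0; case/andP => /andP [_ H] _.
    exact: le_lt_trans (Hdeg _) H.
  apply: ler_sum => r _; have := Hv (lift ord0 r); case/andP => /andP [_ H] _.
  exact: le_trans (Hdeg _) (ltW H).
move: Hlow; rewrite sumr_const card_ord -mulr_sumr -mulr_natl.
have : 0 <= n%:R :> R by rewrite ler0n.
move: Hsum; nra.
Qed.


Lemma free_below i L' N : 2 <= (L'.+1)%:R * delta -> good i -> tk (2 * L') < g i ->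
  g i <= tk N ->
  exists k, [/\ (k < N)%N, free k, tk k < g i & g i <= 4%:R ^+ (2 * L').+1 * tk k].
Proof.
move=> HL Hgood Hlo Hhi.
have exP : exists k, g i <= tk k.+1.
  by exists N; apply: le_trans Hhi (tk_mono (leqnSn N)).
case: (ex_minnP exP) => a Ha Hmin.
have a2L : (2 * L' <= a)%N.
  rewrite leqNgt; apply/negP => Hlt.
  have := tk_mono Hlt; move: Ha Hlo; lra.
have aN : (a < N)%N.
  case: N Hhi => [|N'] Hhi.
    have := tk_mono (leq0n (2 * L')); move: Hhi Hlo; lra.
  by rewrite ltnS; apply: Hmin.
have ta : tk a < g i.
  case: a Ha Hmin a2L aN => [|a'] Ha Hmin a2L aN.
    exact: le_lt_trans (tk_mono (leq0n _)) Hlo.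
  rewrite ltNge; apply/negP => H; have := Hmin _ H; rewrite ltnn.
  by [].
have [r rL Hfree] := count_free HL a2L.
exists (a - 2 * r)%N; split => //.
- by apply: leq_ltn_trans aN; apply: leq_subr.
- exact: le_lt_trans (tk_mono (leq_subr _ _)) ta.
- apply: (le_trans Ha).
  have -> : a.+1 = ((a - 2 * r) + (2 * r).+1)%N by lia.
  rewrite tk_add ler_pM2r ?tk_gt0 // ler_eXn2l ?ltr1n //.
  by rewrite ltnS leq_mul2l.


Qed.



Lemma mult_bound i j k : free k ->
  ((e i j) && (tk k < g i) && ~~ (tk k < g j))%:R * tk k ^+ 2 <=
  (e i j)%:R * ((g j <= tk k)%R%:R * (4%:R * tk k < g i)%R%:R * tk k ^+ 2
               + (bad i)%:R * (tk k < g i)%R%:R * tk k ^+ 2).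
Proof.
move=> Hf.
case E: (e i j) => /=; first last.
  by rewrite ?mulr0n !mul0r.
case Hi: (tk k < g i) => /=; first last.
  by rewrite ?mulr0n mul0r; nn.
case Hj: (tk k < g j) => /=.
  by rewrite ?mulr0n mul0r; nn.
rewrite (leNgt (g j)) Hj /= ?mulr1n !mul1r !mulr1.
case H4: (4%:R * tk k < g i) => /=.
  by rewrite ?mulr1n mul1r lerDl; nn.
rewrite ?mulr0n mul0r add0r.
have Hbad : bad i.
  rewrite /bad (lt_trans (tk_gt0 k) Hi) /=.
  apply/negP => Hg; move/forallP: Hf => /(_ i); rewrite Hg /= Hi /= tkS.
  by rewrite (leNgt (g i)) H4.
by rewrite Hbad ?mulr1n mul1r.
Qed.

Lemma sumA i j N :
  \sum_(k < N) (g j <= tk k)%R%:R * (4%:R * tk k < g i)%R%:R * tk k ^+ 2 <= (g i - g j)^+2.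
Proof.
case: (ltP (g j) (g i / 4%:R)) => Hgj.
  apply: le_trans (_ : \sum_(k < N) (tk k < g i / 4%:R)%R%:R * tk k ^+ 2 <= _).
    apply: ler_sum => k _.
    case: (g j <= tk k) => /=; last by rewrite ?mulr0n !mul0r; nn.
    case H: (4%:R * tk k < g i) => /=; last by rewrite ?mulr0n mulr0 mul0r; nn.
    have -> : tk k < g i / 4%:R by move: H; rewrite ltr_pdivlMr ?ltr0n // mulrC.
    by rewrite /= mul1r.
  apply: le_trans (geom _ _) _.
  have := g_ge0 j; have := g_ge0 i; move: Hgj; nra.
rewrite big1; first by nn.
move=> k _; case H1: (g j <= tk k) => /=; last by rewrite ?mulr0n !mul0r.
case H2: (4%:R * tk k < g i) => /=; last by rewrite ?mulr0n mulr0 mul0r.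
exfalso; move: Hgj H1 H2; lra.
Qed.

Lemma pair_bound i j N :
  \sum_(k < N) (free k)%:R * (((e i j) && (tk k < g i) && ~~ (tk k < g j))%:R * tk k ^+ 2)
  <= (e i j)%:R * ((g i - g j)^+2 + 2%:R * (bad i)%:R * g i ^+ 2).
Proof.
apply: le_trans (_ : \sum_(k < N) (e i j)%:R *
   ((g j <= tk k)%R%:R * (4%:R * tk k < g i)%R%:R * tk k ^+ 2
    + (bad i)%:R * (tk k < g i)%R%:R * tk k ^+ 2) <= _).
  apply: ler_sum => k _; case Hf: (free k) => /=.
    by rewrite mul1r; apply: mult_bound.
  by rewrite ?mulr0n mul0r; nn.
rewrite -mulr_sumr ler_wpM2l ?ler0n // big_split /=.
apply: lerD; first exact: sumA.
under eq_bigr do rewrite -mulrA.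
rewrite -mulr_sumr (mulrC 2%:R) -mulrA ler_wpM2l ?ler0n //.
apply: le_trans (geom _ _) _.
have := sqr_ge0 (g i); lra.
Qed.

End ML.

Section Cheeg.
Variable R : realType.
Variable n : nat.
Variable e : rel 'I_n.
Variable delta : R.
Hypothesis delta_gt0 : 0 < delta.
Hypothesis Hdeg : forall v, delta * n%:R <= dR R e v.

Lemma VolE (S : {set 'I_n}) : (Vol e S)%:R = \sum_i (i \in S)%:R * dR R e i :> R.
Proof.
rewrite /Vol natr_sum big_mkcond /=; apply: eq_bigr => i _.
by case: (i \in S); rewrite ?mul1r ?mul0r.
Qed.

Lemma bdryE (S : {set 'I_n}) :
  (bdry e S)%:R = \sum_i \sum_j ((e i j) && (i \in S) && (j \notin S))%:R :> R.
Proof.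
rewrite /bdry -sum1dep_card natr_sum pair_big /= big_mkcond /=.
apply: eq_bigr => [[i j]] _ /=.
by case: (e i j); case: (i \in S); case: (j \in S).
Qed.

Lemma cheeger_ge0 : 0 <= cheeger e R.
Proof.
rewrite /cheeger; apply: le_bigmin => [|S _]; first exact: ler01.
by rewrite divr_ge0 ?ler0n.
Qed.

Lemma cheeger_le1 : cheeger e R <= 1.
Proof. exact: bigmin_le_id. Qed.

Lemma phi_vol (S : {set 'I_n}) : (2 * Vol e S <= Vol e setT)%N ->
  cheeger e R * (Vol e S)%:R <= (bdry e S)%:R.
Proof.
move=> Hhalf.
case: (eqVneq S set0) => [->|Sn0].
  by rewrite /Vol big_set0 mulr0 ler0n.
have HP : (S != set0) && (piS e R S <= 2^-1).
  rewrite Sn0 /= /piS.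
  case: (eqVneq (Vol e setT) 0%N) => [->|HT].
    by rewrite invr0 mulr0 invr_ge0 ler0n.
  rewrite ler_pdivrMr ?ltr0n ?lt0n //.
  have := Hhalf; rewrite -(ler_nat R) natrM => H; lra.
have HVpos : 0 < (Vol e S)%:R :> R.
  case/set0Pn: Sn0 => i0 Hi0.
  rewrite VolE (bigD1 i0) //= Hi0 mul1r.
  apply: lt_le_trans (_ : dR R e i0 <= _).
    apply: lt_le_trans (Hdeg i0); rewrite mulr_gt0 // ltr0n.
    by apply: leq_ltn_trans (ltn_ord i0).
  by rewrite lerDl; apply: sumr_ge0 => i _; rewrite mulr_ge0 ?ler0n.
have := @bigmin_le_cond _ _ _ (1 : R) S (fun S => (S != set0) && (piS e R S <= 2^-1)) (fun S => (bdry e S)%:R / (Vol e S)%:R) HP.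
rewrite -/(cheeger e R) ler_pdivlMr //.
Qed.

End Cheeg.


Section ML2.
Variable R : realType.
Variable n : nat.
Variable e : rel 'I_n.
Hypothesis esym : symmetric e.
Variable delta : R.
Hypothesis delta_gt0 : 0 < delta.
Hypothesis Hdeg : forall v, delta * n%:R <= dR R e v.
Variable g : 'I_n -> R.
Hypothesis g_ge0 : forall i, 0 <= g i.
Hypothesis Hhalf : forall t : R, 0 < t -> (2 * Vol e [set i | (t < g i)%R] <= Vol e setT)%N.
Variable L' : nat.
Hypothesis HL : 2 <= (L'.+1)%:R * delta.

Local Notation d := (dR R e).

Theorem ML : cheeger e R * Qf e g <=
   (17%:R * (4%:R ^+ (2 * L').+1) ^+ 2 + 8%:R) * E2 e g.
Proof.
set K := (4%:R ^+ (2 * L').+1) ^+ 2 : R.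
have Kpos : 0 < K by rewrite /K exprn_gt0 // exprn_gt0 // ltr0n.
have E2p := E2_ge0 e g.
have Phi0 := cheeger_ge0 R e.
have Phi1 := cheeger_le1 R e.
case: (boolP [exists i, 0 < g i]) => [/existsP [i0 Hi0] | Hnone]; last first.
  have -> : Qf e g = 0.
    rewrite /Qf big1 // => i _.
    have : ~~ (0 < g i) by move/existsPn: Hnone => /(_ i).
    rewrite -leNgt => H; have -> : g i = 0 by have := g_ge0 i; lra.
    by rewrite expr0n mulr0.
  by rewrite mulr0; nn.
case: (@arg_minP _ _ _ i0 (fun i => 0 < g i) g Hi0) => j0 Hj0 Hmin.
pose m := g j0 / 4%:R ^+ (2 * L').+1.
have m_gt0 : 0 < m by rewrite /m divr_gt0 // exprn_gt0 // ltr0n.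
have tk2L : forall i, 0 < g i -> tk m (2 * L') < g i.
  move=> i Hi; apply: lt_le_trans (Hmin i Hi).
  rewrite /tk /m exprS invfM mulrA -mulrA mulVf ?mulr1; last first.
    by rewrite expf_neq0 // pnatr_eq0.
  rewrite -[X in _ < X]mulr1 ltr_pM2l // invf_lt1 ?ltr0n // ltr1n //.
have [N HN] : exists N : nat, (\sum_i g i) / m < N%:R.
  exists (Num.Def.archi_bound ((\sum_i g i) / m)); apply: archi_boundP.
  by rewrite divr_ge0 ?(ltW m_gt0) // sumr_ge0.
have gN : forall i, g i <= tk m N.
  move=> i; have Hsum : g i <= \sum_i g i.
    by rewrite (bigD1 i) //= lerDl sumr_ge0.
  have HN' : \sum_i g i < N%:R * m by rewrite -ltr_pdivrMr.
  have HN4 : (N%:R : R) <= 4%:R ^+ N.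
    by rewrite -natrX ler_nat ltnW // ltn_expl.
  rewrite /tk; apply: (le_trans Hsum); apply: ltW; apply: (lt_le_trans HN').
  by rewrite mulrC ler_pM2l.
pose F k := (free e g m k)%:R * tk m k ^+ 2.
have F0 : forall k, 0 <= F k by move=> k; rewrite /F; nn.
pose A := \sum_(k < N) F k * (Vol e [set i | (tk m k < g i)%R])%:R.
pose B := \sum_(k < N) F k * (bdry e [set i | (tk m k < g i)%R])%:R.
have HAB : cheeger e R * A <= B.
  rewrite /A /B mulr_sumr; apply: ler_sum => k _.
  rewrite mulrCA ler_wpM2l //.
  exact: (phi_vol delta_gt0 Hdeg (Hhalf (tk_gt0 m_gt0 k))).
have HB : B <= 17%:R * E2 e g.
  have -> : B = \sum_i \sum_j \sum_(k < N) (free e g m k)%:R *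
       (((e i j) && (tk m k < g i) && ~~ (tk m k < g j))%:R * tk m k ^+ 2).
    rewrite /B.
    transitivity (\sum_(k < N) \sum_i \sum_j (free e g m k)%:R *
       (((e i j) && (tk m k < g i) && ~~ (tk m k < g j))%:R * tk m k ^+ 2)).
      apply: eq_bigr => k _; rewrite bdryE mulr_sumr; apply: eq_bigr => i _.
      rewrite mulr_sumr; apply: eq_bigr => j _; rewrite !inE /F; ring.
    rewrite exchange_big; apply: eq_bigr => i _; exact: exchange_big.
  apply: le_trans (_ : \sum_i \sum_j (e i j)%:R * ((g i - g j)^+2 + 2%:R * (bad e g i)%:R * g i ^+ 2) <= _).
    apply: ler_sum => i _; apply: ler_sum => j _.
    exact: pair_bound.
  have -> : \sum_i \sum_j (e i j)%:R * ((g i - g j)^+2 + 2%:R * (bad e g i)%:R * g i ^+ 2)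
      = E2 e g + \sum_i 2%:R * (bad e g i)%:R * (d i * g i ^+ 2).
    rewrite /E2 -big_split /=; apply: eq_bigr => i _.
    rewrite dRE mulr_suml mulr_sumr -big_split /=; apply: eq_bigr => j _; ring.
  have : \sum_i 2%:R * (bad e g i)%:R * (d i * g i ^+ 2) <= 16%:R * E2 e g.
    rewrite /E2 mulr_sumr; apply: ler_sum => i _.
    have Hrow := rowE2_ge0 e g i.
    case: (boolP (bad e g i)) => Hb /=.
      by have := bad_bound Hb; lra.
    by rewrite mulr0 mul0r; nn.
  lra.
have HA : Qf e g <= K * A + 8%:R * E2 e g.
  have -> : A = \sum_i d i * \sum_(k < N) F k * (tk m k < g i)%R%:R.
    rewrite /A; under eq_bigr do rewrite VolE mulr_sumr.
    rewrite exchange_big; apply: eq_bigr => i _; rewrite mulr_sumr.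
    by apply: eq_bigr => k _; rewrite inE; ring.
  rewrite /Qf /E2 mulr_sumr mulr_sumr -big_split /=; apply: ler_sum => i _.
  have Hrow := rowE2_ge0 e g i.
  have Hsum0 : 0 <= \sum_(k < N) F k * (tk m k < g i)%R%:R.
    by apply: sumr_ge0 => k _; apply: mulr_ge0.
  have Hd0 : 0 <= d i by rewrite /dR ler0n.
  case: (boolP (0 < g i)) => Hgi; last first.
    have H0 : g i = 0 by move: Hgi; rewrite -leNgt => H; have := g_ge0 i; lra.
    have -> : d i * g i ^+ 2 = 0 by rewrite H0 expr2 !mulr0.
    have := mulr_ge0 Hd0 Hsum0; nra.
  case: (boolP (good e g i)) => Hgood.
    have [k0 [k0N Hf Hlt Hle]] := free_below delta_gt0 Hdeg m_gt0 HL Hgood (tk2L i Hgi) (gN i).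
    have Hk0 : tk m k0 ^+ 2 <= \sum_(k < N) F k * (tk m k < g i)%R%:R.
      rewrite (bigD1 (Ordinal k0N)) //= /F Hf Hlt /= mul1r mulr1 lerDl.
      by apply: sumr_ge0 => k _; nn.
    have Hsq : g i ^+ 2 <= K * tk m k0 ^+ 2.
      rewrite /K -exprMn lerXn2r ?nnegrE ?g_ge0 //.
      by rewrite mulr_ge0 ?exprn_ge0 ?ler0n // ltW ?tk_gt0.
    have := ler_wpM2l Hd0 Hsq; have := ler_wpM2l (mulr_ge0 Hd0 (ltW Kpos)) Hk0.
    lra.
  have Hbad : bad e g i by rewrite /bad Hgi Hgood.
  have := bad_bound Hbad; have := mulr_ge0 (ltW Kpos) (mulr_ge0 Hd0 Hsum0); lra.
have : cheeger e R * Qf e g <= cheeger e R * (K * A + 8%:R * E2 e g).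
  by rewrite ler_wpM2l.
nra.
Qed.

End ML2.


Definition pp {R : realType} (x : R) := (x + `|x|) / 2%:R.

Lemma pp_ge0 {R : realType} (x : R) : 0 <= pp x.
Proof. rewrite /pp divr_ge0 ?ler0n //; have := ler_norm (-x); rewrite normrN; lra. Qed.

Lemma pp_pos {R : realType} (x t : R) : 0 < t -> t < pp x -> 0 < x.
Proof.
move=> t0; rewrite /pp; case: (leP x 0) => // Hx.
by rewrite ler0_norm // subrr mul0r => H; have := lt_trans t0 H; rewrite ltxx.
Qed.

Lemma pp_sq {R : realType} (x : R) : pp x ^+ 2 + pp (- x) ^+ 2 = x ^+ 2.
Proof.
rewrite /pp normrN.
have H : `|x| ^+ 2 = x ^+ 2 by rewrite real_normK ?num_real.
have -> : ((x + `|x|) / 2%:R) ^+ 2 + ((- x + `|x|) / 2%:R) ^+ 2 = (x ^+ 2 + `|x| ^+ 2) / 2%:R.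
  by field.
by rewrite H; field.
Qed.

Lemma pp_dist {R : realType} (a b : R) :
  (pp a - pp b) ^+ 2 + (pp (- a) - pp (- b)) ^+ 2 <= (a - b) ^+ 2.
Proof.
rewrite /pp !normrN.
have Hq : (`|a| - `|b|) ^+ 2 <= (a - b) ^+ 2.
  rewrite -[X in _ <= X]real_normK ?num_real // -[X in X <= _]real_normK ?num_real //.
  rewrite lerXn2r ?nnegrE ?normr_ge0 //; exact: ler_dist_dist.
have -> : ((a + `|a|) / 2%:R - (b + `|b|) / 2%:R) ^+ 2 +
   ((- a + `|a|) / 2%:R - (- b + `|b|) / 2%:R) ^+ 2 =
   ((a - b) ^+ 2 + (`|a| - `|b|) ^+ 2) / 2%:R by field.
lra.
Qed.

Section Poinc.
Variable R : realType.
Variable n : nat.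
Variable e : rel 'I_n.
Hypothesis esym : symmetric e.
Variable delta : R.
Hypothesis delta_gt0 : 0 < delta.
Hypothesis Hdeg : forall v, delta * n%:R <= dR R e v.
Local Notation d := (dR R e).

Lemma Vol_mono (S U : {set 'I_n}) : S \subset U -> (Vol e S <= Vol e U)%N.
Proof.
move=> SU; rewrite -(ler_nat R) !VolE; apply: ler_sum => i _.
rewrite ler_wpM2r ?ler0n // ler_nat.
by case: (boolP (i \in S)) => // /(subsetP SU) ->.
Qed.

Lemma Vol_compl (S : {set 'I_n}) : (Vol e S + Vol e (~: S))%N = Vol e setT.
Proof.
apply/eqP; rewrite -(eqr_nat R) natrD !VolE -big_split /=; apply/eqP.
apply: eq_bigr => i _; rewrite !inE; case: (i \in S); rewrite /= ?mul1r ?mul0r ?addr0 ?add0r //.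
Qed.

Lemma median (u : 'I_n -> R) (i0 : 'I_n) : exists m : R,
  (2 * Vol e [set i | (m < u i)%R] <= Vol e setT)%N /\
  (2 * Vol e [set i | (u i < m)%R] <= Vol e setT)%N.
Proof.
pose P j := (Vol e setT <= 2 * Vol e [set i | (u j <= u i)%R])%N.
case: (@arg_minP _ _ _ i0 xpredT u isT) => jm _ Hjm.
have Pjm : P jm.
  rewrite /P; have -> : [set i | (u jm <= u i)%R] = setT.
    by apply/setP => i; rewrite !inE Hjm.
  by rewrite leq_pmull.
case: (@arg_maxP _ _ _ jm P u Pjm) => j Pj Hj.
exists (u j); split.
  case: (eqVneq [set i | (u j < u i)%R] set0) => [->|Hne].
    by rewrite /Vol big_set0.
  case/set0Pn: Hne => k0; rewrite inE => Hk0.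
  case: (@arg_minP _ _ _ k0 (fun i => u j < u i) u Hk0) => j1 Hj1 Hmin1.
  have Heq : [set i | (u j < u i)%R] = [set i | (u j1 <= u i)%R].
    apply/setP => i; rewrite !inE; apply/idP/idP => H.
      exact: Hmin1.
    exact: lt_le_trans Hj1 H.
  rewrite Heq; have : ~~ P j1.
    apply/negP => Pj1; have := Hj _ Pj1; rewrite /=; move: Hj1; lra.
  by rewrite /P -ltnNge => /ltnW.
have := Vol_compl [set i | (u j <= u i)%R].
have -> : ~: [set i | (u j <= u i)%R] = [set i | (u i < u j)%R].
  by apply/setP => i; rewrite !inE -ltNge.
move: Pj; rewrite /P; lia.
Qed.

Variable L' : nat.
Hypothesis HL : 2 <= (L'.+1)%:R * delta.

Lemma poincare (u : 'I_n -> R) : \sum_i d i * u i = 0 ->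
  cheeger e R * Qf e u <= (17%:R * (4%:R ^+ (2 * L').+1) ^+ 2 + 8%:R) * E2 e u.
Proof.
move=> Hu.
set C := (17%:R * _ + _).
have Phi0 := cheeger_ge0 R e.
have C0 : 0 <= C by rewrite /C; nn.
case: (posnP n) => [n0|npos].
  rewrite /Qf big1 ?mulr0; first by apply: mulr_ge0 => //; exact: E2_ge0.
  by move=> i; have := ltn_ord i; rewrite {2}n0.
have [m [Hp Hm]] := median u (Ordinal npos).
pose fp i := pp (u i - m).
pose fm i := pp (- (u i - m)).
have Hfp : cheeger e R * Qf e fp <= C * E2 e fp.
  apply: (ML delta_gt0 Hdeg) => //; first by move=> i; apply: pp_ge0.
  move=> t t0; apply: leq_trans Hp; rewrite leq_mul2l /=; apply: Vol_mono.
  apply/subsetP => i; rewrite !inE => H; have := pp_pos t0 H; lra.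
have Hfm : cheeger e R * Qf e fm <= C * E2 e fm.
  apply: (ML delta_gt0 Hdeg) => //; first by move=> i; apply: pp_ge0.
  move=> t t0; apply: leq_trans Hm; rewrite leq_mul2l /=; apply: Vol_mono.
  apply/subsetP => i; rewrite !inE => H; have := pp_pos t0 H; lra.
have HE : E2 e fp + E2 e fm <= E2 e u.
  rewrite /E2 -big_split /=; apply: ler_sum => i _.
  rewrite -big_split /=; apply: ler_sum => j _.
  rewrite -mulrDr ler_wpM2l ?ler0n //.
  have := pp_dist (u i - m) (u j - m).
  have -> : u i - m - (u j - m) = u i - u j by ring.
  by [].
have HQ : Qf e u <= Qf e fp + Qf e fm.
  have -> : Qf e fp + Qf e fm = \sum_i d i * (u i - m) ^+ 2.
    rewrite /Qf -big_split /=; apply: eq_bigr => i _.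
    by rewrite -mulrDr /fp /fm pp_sq.
  have -> : \sum_i d i * (u i - m) ^+ 2 =
      Qf e u - 2%:R * m * \sum_i d i * u i + m ^+ 2 * \sum_i d i.
    rewrite /Qf !mulr_sumr -sumrB -big_split /=; apply: eq_bigr => i _; ring.
  rewrite Hu mulr0 subr0 lerDl mulr_ge0 ?sqr_ge0 //.
  by apply: sumr_ge0 => i _; rewrite ler0n.
have := ler_wpM2l Phi0 HQ; have := ler_wpM2l C0 HE; lra.
Qed.

End Poinc.


Section Gap.
Variable R : realType.
Variable n' : nat.
Local Notation n := n'.+1.
Variable e : rel 'I_n.
Hypothesis esym : symmetric e.
Variable delta : R.
Hypothesis delta_gt0 : 0 < delta.
Hypothesis Hdeg : forall v, delta * n%:R <= dR R e v.
Variable L' : nat.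
Hypothesis HL : 2 <= (L'.+1)%:R * delta.
Local Notation d := (dR R e).
Local Notation C := (17%:R * (4%:R ^+ (2 * L').+1) ^+ 2 + 8%:R : R).

Lemma d_gt0 i : 0 < d i.
Proof. by apply: lt_le_trans (Hdeg i); rewrite mulr_gt0 // ltr0n. Qed.

Lemma trans_mxE i j : trans_mx e R i j = (e i j)%:R / d i.
Proof. by rewrite /trans_mx mxE /dR; case: (e i j); rewrite ?mul1r ?mul0r. Qed.

Lemma Prow i : \sum_j trans_mx e R i j = 1.
Proof.
under eq_bigr do rewrite trans_mxE.
by rewrite -mulr_suml -dRE divff // lt0r_neq0 // d_gt0.
Qed.

Lemma gap_root lam : root (char_poly (Pd (trans_mx e R))) lam ->
  cheeger e R <= 2%:R * C * (1 - lam) /\ lam <= 1.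
Proof.
move=> Hr; have [v [vn0 vP vs]] := deflate_eigen Prow Hr.
pose u i := v ord0 i / d i.
have vu : forall i, v ord0 i = d i * u i.
  by move=> i; rewrite /u mulrC divfK // lt0r_neq0 // d_gt0.
have Heig : forall j, \sum_i (e i j)%:R * u i = lam * d j * u j.
  move=> j; have := congr1 (fun M : 'rV[R]_n => M ord0 j) vP; rewrite !mxE -mulrA -vu => <-.
  by apply: eq_bigr => i _; rewrite trans_mxE vu /u; field; rewrite lt0r_neq0 // d_gt0.
have Hsum : \sum_i d i * u i = 0.
  by rewrite -[RHS]vs; apply: eq_bigr => i _; rewrite vu.
have Hray := rayleigh esym Heig.
have Hpo := poincare delta_gt0 Hdeg HL Hsum.
have Qpos : 0 < Qf e u.
  have [i Hi] : exists i, v ord0 i != 0.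
    apply/existsP; move: vn0; apply: contraR; rewrite negb_exists => /forallP H.
    apply/eqP/rowP => i; rewrite mxE; have := H i; rewrite negbK => /eqP ->.
    done.
  have ui : u i != 0 by move: Hi; rewrite vu mulf_eq0 negb_or => /andP [].
  rewrite /Qf (bigD1 i) //=.
  apply: lt_le_trans (_ : d i * u i ^+ 2 <= _).
    by rewrite mulr_gt0 ?d_gt0 // lt_def sqrf_eq0 ui sqr_ge0.
  rewrite lerDl; apply: sumr_ge0 => k _; rewrite mulr_ge0 ?sqr_ge0 // ltW // d_gt0.
have E2p := E2_ge0 e u.
rewrite Hray in Hpo E2p.
split.
  have : cheeger e R * Qf e u <= (2%:R * C * (1 - lam)) * Qf e u.
    by apply: (le_trans Hpo); rewrite le_eqVlt; apply/orP; left; apply/eqP; ring.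
  by rewrite ler_pM2r.
nra.
Qed.

End Gap.

Unset Implicit Arguments.

Theorem theorem1p2 (R : realType) (delta : R) :
  0 < delta < 1 ->
  exists c : R, 0 < c /\
    forall (n : nat) (e : rel 'I_n),
      simple_graph e ->
      (forall v : 'I_n, delta * n%:R <= (deg e v)%:R) ->
      forall s : seq R, sorted_spectrum e s ->
        (* spectral gap gamma(G) = 1 - lambda_2 with lambda_2 = s`_1 *)
        c * cheeger e R <= 1 - s`_1.
Proof.
move=> /andP [d0 d1].
have [L' HL'] : exists L' : nat, 2%:R / delta < L'%:R.
  exists (Num.Def.archi_bound (2%:R / delta)).
  exact: (@archi_boundP _ (2%:R / delta) (divr_ge0 (ler0n _ 2) (ltW d0))).
have HL : 2 <= (L'.+1)%:R * delta.
  move: HL'; rewrite ltr_pdivrMr // => H.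
  have -> : (L'.+1)%:R = L'%:R + 1 :> R by rewrite -addn1 natrD.
  lra.
pose C := (17%:R * (4%:R ^+ (2 * L').+1) ^+ 2 + 8%:R : R).
have C8 : 8%:R <= C by rewrite /C lerDr mulr_ge0 ?ler0n ?sqr_ge0.
have Cpos : 0 < 2%:R * C by rewrite mulr_gt0 ?ltr0n //; lra.
exists (2%:R * C)^-1; split; first by rewrite invr_gt0.
move=> n e [esym eirr] Hdeg s [Hsort Hchar].
have Phi0 := cheeger_ge0 R e.
have Phi1 := cheeger_le1 R e.
have c1 : (2%:R * C)^-1 <= 1.
  rewrite invf_le1 //; lra.
have cPhi1 : (2%:R * C)^-1 * cheeger e R <= 1.
  have c0 : 0 <= (2%:R * C)^-1 by rewrite invr_ge0 ltW.
  by have := ler_pM c0 Phi0 c1 Phi1; rewrite mulr1.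
have Hsize : size s = n.
  have := congr1 (fun p : {poly R} => size p) Hchar; rewrite /= size_char_poly size_prod_XsubC.
  by case.
case: s Hsort Hchar Hsize => [|s0 [|s1 rest]] Hsort Hchar Hsize.
- by rewrite /= subr0.
- by rewrite /= subr0.
- move: Hsize => /= Hsize; subst n.
  have Hdeg' : forall v, delta * (size rest).+2%:R <= dR R e v := Hdeg.
  have Hdef := char_poly_deflate (Prow d0 Hdeg').
  have gap := gap_root esym d0 Hdeg' HL.
  set chid := char_poly (Pd _) in Hdef gap.
  rewrite Hdef !big_cons in Hchar.
  have s10 : s1 <= s0 by move: Hsort => /= /andP [].
  have rootRHS : forall x, x != 1 -> root ((('X - s0%:P) * (('X - s1%:P) *
        \prod_(j <- rest) ('X - j%:P)))) x -> root chid x.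
    by move=> x Hx; rewrite -Hchar rootM root_XsubC (negPf Hx).
  have Hr : root chid s1.
    case: (eqVneq s1 1) => [H1|H1]; last first.
      by apply: rootRHS => //; rewrite !rootM !root_XsubC eqxx !orbT.
    case: (eqVneq s0 1) => [H0|H0]; last first.
      have Hr0 : root chid s0 by apply: rootRHS => //; rewrite rootM root_XsubC eqxx.
      have := gap s0 Hr0.
      move: H0 s10; rewrite H1 => H0 s10 [_ Hs0].
      by exfalso; move/eqP: H0; apply; apply/eqP; rewrite eq_le Hs0 s10.
    move: Hchar; rewrite H0 H1 => /mulfI H.
    rewrite H ?monic_neq0 ?monicXsubC // rootM root_XsubC eqxx //.
  have [Hphi _] := gap s1 Hr.
  rewrite /=.
  have c0 : 0 <= (2%:R * C)^-1 by rewrite invr_ge0 ltW.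
  apply: le_trans (ler_wpM2l c0 Hphi) _.
  rewrite mulrA mulVf ?mul1r //; lra.
Qed.
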